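(* Let $\mu$ be a $(C,\gamma)$-absolutely decaying measure on $\mathbb{R}$ with associated constant $\rho_0$, let $K=\operatorname{supp}\mu$, and let $0<\alpha\le\frac14\left(\frac{1}{3C}\right)^{1/\gamma}$. Then for every $0<\rho<\rho_0$, every $x_1\in K$ and every finite collection of points $y_1,\dots,y_N\in\mathbb{R}$, there exists $x_1'\in K$ with $B(x_1',\alpha\rho)\subset B(x_1,\rho)$ and such that for at least half of the indices $i\in\{1,\dots,N\}$ one has $d(B(x_1',\alpha\rho),y_i)>\alpha\rho$.
   Context: $B(x,\rho)$ denotes the closed interval $[x-\rho,x+\rho]$, and $d(A,y)=\inf_{a\in A}|a-y|$. A locally finite Borel measure $\mu$ on $\mathbb{R}$ is $(C,\gamma)$-absolutely decaying with constant $\rho_0>0$ if for all $0<\rho\le\rho_0$, $x\in\operatorname{supp}\mu$, $y\in\mathbb{R}$, $\varepsilon>0$: $\mu(B(x,\rho)\cap B(y,\varepsilon\rho))<C\varepsilon^\gamma\mu(B(x,\rho))$. *)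

(* Defs.v *)
From HB Require Import structures.
From mathcomp Require Import all_boot all_order all_algebra.
From mathcomp Require Import all_classical all_reals all_analysis.
Set Implicit Arguments. Unset Strict Implicit. Unset Printing Implicit Defensive.
Import Order.TTheory GRing.Theory Num.Theory.
Local Open Scope classical_set_scope.
Local Open Scope ring_scope.

Definition cball (R : realType) (x r : R) : set R := [set z | `|z - x| <= r].

Definition dist_set (R : realType) (A : set R) (y : R) : R :=
  inf [set `|a - y| | a in A].

(* Borel measure on R (the canonical measurable structure of R) *)
Definition locally_finite (R : realType) (mu : {measure set R -> \bar R}) : Prop :=
  forall x : R, exists2 r : R, 0 < r & (mu (cball x r) < +oo)%E.

Definition supp (R : realType) (mu : {measure set R -> \bar R}) : set R :=
  [set x | forall r : R, 0 < r -> (0 < mu [set z | (`|z - x| < r)%R])%E].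

Definition absolutely_decaying (R : realType) (mu : {measure set R -> \bar R})
    (C gamma rho0 : R) : Prop :=
  forall rho : R, 0 < rho -> rho <= rho0 ->
  forall x : R, supp mu x -> forall y eps : R, 0 < eps ->
    (mu (cball x rho `&` cball y (eps * rho)%R) <
       (C * eps `^ gamma)%R%:E * mu (cball x rho))%E.

(* Main.v *)
Require Import Defs.
From HB Require Import structures.
From mathcomp Require Import all_boot all_order all_algebra.
From mathcomp Require Import all_classical all_reals all_analysis.
From mathcomp Require Import lra zify.
Import Order.TTheory GRing.Theory Num.Theory.
Local Open Scope classical_set_scope.
Local Open Scope ring_scope.

Lemma oballE (R : realType) (z r : R) :
  [set w | `|w - z| < r] = [set` `]z - r, z + r[].
Proof.
by apply/seteqP; split => w /=; rewrite in_itv /= ltr_distl.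
Qed.

Lemma cballE (R : realType) (z r : R) : cball z r = [set` `[z - r, z + r]].
Proof.
by apply/seteqP; split => w /=; rewrite /cball /= in_itv /= ler_distl.
Qed.

Lemma supp_of_pos (R : realType) (mu : {measure set R -> \bar R}) (A : set R) :
  measurable A -> (0 < mu A)%E -> exists z, A z /\ supp mu z.
Proof.
move=> mA muA; apply: contrapT => /forallNP H.
pose F (n : nat) : set R := [set z | exists p q : rat, unpickle n = Some (p, q) /\
   mu [set` `]ratr p, ratr q[] = 0%E /\ [set` `]ratr p, (ratr q : R)[] z].
have FN : forall n, mu.-negligible (F n).
  move=> n; case E: (@unpickle (rat * rat)%type n) => [[p q]|]; last first.
    apply: (negligibleS _ (negligible_set0 mu)).
    by move=> z [p [q [e _]]]; rewrite E in e.
  have [h|h] := pselect (mu [set` `]ratr p, (ratr q : R)[] = 0%E).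
    apply: (negligibleS _ ((negligibleP _ (measurable_itv _)).2 h)).
    by move=> z [p' [q' [e [_ zi]]]]; rewrite E in e; by case: e => -> ->.
  apply: (negligibleS _ (negligible_set0 mu)).
  by move=> z [p' [q' [e [m _]]]]; rewrite E in e; case: e => ? ?; subst; exact: h.
have : mu.-negligible A.
  apply: (negligibleS _ (negligible_bigcup FN)).
  move=> z Az.
  have nsz : ~ supp mu z by move=> s; apply: (H z).
  move/existsNP: nsz => [r /not_implyP [r0 /negP]].
  rewrite -leNgt => hr.
  have h1 : z - r < z by lra.
  have [p] := rat_in_itvoo h1.
  rewrite in_itv /= => /andP [p1 p2].
  have h2 : z < z + r by lra.
  have [q] := rat_in_itvoo h2.
  rewrite in_itv /= => /andP [q1 q2].
  exists (pickle (p, q)) => //.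
  exists p, q; split; first by rewrite pickleK.
  split; last by rewrite /= in_itv /= p2 q1.
  apply/eqP; rewrite eq_le measure_ge0 andbT.
  apply: le_trans hr; rewrite oballE; apply: le_measure; rewrite ?inE; try exact: measurable_itv.
  move=> w /=; rewrite !in_itv /= => /andP [w1 w2]; apply/andP; split; lra.
move=> /(measure_negligible mA) m0; move: muA; by rewrite m0 ltxx.
Qed.

Lemma dist_gt (R : realType) (c r yv : R) : 0 <= r -> 2 * r < `|yv - c| ->
  r < dist_set (cball c r) yv.
Proof.
move=> r0 h; apply: (@lt_le_trans _ _ (`|yv - c| - r)); first by lra.
apply: lb_le_inf.
  by exists `|c - yv|, c => //; rewrite /cball /= subrr normr0.
move=> v [a ha <-]; have := ler_distD a yv c; rewrite (distrC a yv).
move: ha; rewrite /cball /= => ha; lra.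
Qed.

Theorem lemma3p2 (R : realType) (mu : {measure set R -> \bar R})
  (C gamma rho0 alpha : R) :
  0 < C -> 0 < gamma -> 0 < rho0 ->
  locally_finite mu ->
  absolutely_decaying mu C gamma rho0 ->
  0 < alpha -> alpha <= 4^-1 * ((3 * C)^-1) `^ (gamma^-1) ->
  forall rho : R, 0 < rho -> rho < rho0 ->
  forall x1 : R, supp mu x1 ->
  forall (N : nat) (y : 'I_N -> R),
  exists2 x1' : R, supp mu x1' &
    cball x1' (alpha * rho) `<=` cball x1 rho /\
    exists S : {set 'I_N}, (N <= 2 * #|S|)%N /\
      forall i, i \in S -> dist_set (cball x1' (alpha * rho)) (y i) > alpha * rho.
Proof.
move=> C0 g0 r00 _ dec a0 aeps rho rho0' rr0 x1 sx1 N y.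
set eps := (3 * C)^-1 `^ gamma^-1 in aeps.
have e0 : 0 < eps by apply: powR_gt0; rewrite invr_gt0; lra.
have eg : C * eps `^ gamma = 3^-1.
  rewrite /eps -powRrM mulVf ?gt_eqF // powRr1 ?invr_ge0; last lra.
  by rewrite invfM mulrCA mulfV ?gt_eqF // mulr1.
have rho_le : rho <= rho0 by lra.
have dec' := dec rho rho0' rho_le x1 sx1.
set B := cball x1 rho.
have mball : forall c s : R, measurable (cball c s).
  by move=> c s; rewrite cballE; exact: measurable_itv.
have mB : measurable B by exact: mball.
have Bfin : (mu B < +oo)%E.
  have := dec' x1 1 ltr01; rewrite mul1r setIid powR1 mulr1.
  move=> h; rewrite ltNge leye_eq; apply/negP => /eqP Hoo; move: h.
  by rewrite Hoo mulry gtr0_sg // mul1e ltxx.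
have finE : forall X, measurable X -> X `<=` B -> mu X = (fine (mu X))%:E.
  move=> X mX XB; rewrite fineK // ge0_fin_numE ?measure_ge0 //.
  by apply: le_lt_trans Bfin; apply: le_measure; rewrite ?inE.
set er := eps * rho.
have er0 : 0 < er by rewrite mulr_gt0.
set E := [set` `]x1 + er, x1 + rho - er[] `|` [set` `]x1 - rho + er, x1 - er[].
set D1 := B `&` cball x1 er.
set D2 := B `&` cball (x1 + rho) er.
set D3 := B `&` cball (x1 - rho) er.
have mE : measurable E by apply: measurableU; exact: measurable_itv.
have mD1 : measurable D1 by apply: measurableI.
have mD2 : measurable D2 by apply: measurableI.
have mD3 : measurable D3 by apply: measurableI.
have EB : E `<=` B.
  by move=> w [] /=; rewrite in_itv /= => /andP [w1 w2];
    rewrite /B /cball /= ler_distl; apply/andP; split; lra.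
have cov : B `<=` ((E `|` D1) `|` D2) `|` D3.
  move=> w hw; have := hw; rewrite /B /cball /= ler_distl => /andP [w1 w2].
  have [h1|h1] := lerP `|w - x1| er.
    by left; left; right; split.
  have [h2|h2] := lerP (x1 + rho - er) w.
    by left; right; split; first exact: hw; rewrite /cball /= ler_distl; apply/andP; split; lra.
  have [h3|h3] := lerP w (x1 - rho + er).
    by right; split; first exact: hw; rewrite /cball /= ler_distl; apply/andP; split; lra.
  left; left; left; rewrite /E /= !in_itv /=.
  have [h4|h4] := lerP w x1.
    rewrite ler0_norm in h1; last lra.
    by right; apply/andP; split; lra.
  rewrite gtr0_norm in h1; last lra.
  by left; apply/andP; split; lra.
have le1 : (mu B <= mu E + mu D1 + mu D2 + mu D3)%E.
  apply: (le_trans (le_measure _ _ _ cov)); rewrite ?inE //.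
    by repeat apply: measurableU.
  apply: (le_trans (measureU2 _ _ _)); [by repeat apply: measurableU|by []|].
  apply: leeD => //.
  apply: (le_trans (measureU2 _ _ _)); [by repeat apply: measurableU|by []|].
  apply: leeD => //.
  by apply: (le_trans (measureU2 _ _ _)).
have d1 := dec' x1 eps e0; rewrite eg -/er -/B -/D1 in d1.
have d2 := dec' (x1 + rho) eps e0; rewrite eg -/er -/B -/D2 in d2.
have d3 := dec' (x1 - rho) eps e0; rewrite eg -/er -/B -/D3 in d3.
have Epos : (0 < mu E)%E.
  have f1 := finE D1 mD1 (@subIsetl _ _ _).
  have f2 := finE D2 mD2 (@subIsetl _ _ _).
  have f3 := finE D3 mD3 (@subIsetl _ _ _).
  have f0 := finE E mE EB.
  have fB := finE B mB (@subset_refl _ _).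
  move: le1 d1 d2 d3; rewrite f1 f2 f3 f0 fB.
  rewrite -!EFinD -EFinM !lee_fin !lte_fin => l1 l2 l3 l4.
  have : 0 <= fine (mu E) by rewrite fine_ge0 // measure_ge0.
  lra.
have [z [Ez sz]] := @supp_of_pos _ _ _ mE Epos.
have [zd1 zd2] : er < `|z - x1| /\ `|z - x1| + er < rho.
  case: Ez => /=; rewrite in_itv /= => /andP [w1 w2].
    by rewrite gtr0_norm; [split; lra | lra].
  by rewrite ltr0_norm; [split; lra | lra].
set r := alpha * rho.
have r4 : 4 * r <= er.
  have := ler_wpM2r (ltW rho0') aeps; rewrite -mulrA -/er -/r; lra.
have r0 : 0 <= r by rewrite /r; apply: mulr_ge0; lra.
set S1 := finset (fun i : 'I_N => 2 * r < `|y i - x1|).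
set S2 := finset (fun i : 'I_N => 2 * r < `|y i - z|).
have sub : ~: S1 \subset S2.
  apply/fintype.subsetP => i; rewrite !inE -leNgt => h.
  have := ler_distD (y i) z x1; rewrite (distrC z (y i)); lra.
have c1 := cardsC S1; rewrite card_ord in c1.
have c2 := subset_leq_card sub.
have [hN|hN] := leqP N (2 * #|S1|).
  exists x1 => //; split.
    by move=> w; rewrite /B /cball /= => h; lra.
  exists S1; split => // i; rewrite inE => h; exact: dist_gt.
exists z => //; split.
  by move=> w; rewrite /B /cball /= => h; have := ler_distD z w x1; lra.
exists S2; split; first by move: c1 c2 hN; move: #|S1| #|~: S1| #|S2| => a b c; clear; lia.
by move=> i; rewrite inE => h; exact: dist_gt.
Qed.
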